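(* Under the hypotheses of the stable-fixed-point theorem (Assumptions (A1), (A2)), let $q^\ast\in\mathbb S^\circ$ satisfy $\nabla\ell(p,q^\ast|x)=\mathbf 1$, and let $$B=-\mathrm{diag}(q^\ast)\,\nabla^2\ell(p,q^\ast|x)=\frac1{2M}\sum_{m=1}^M\sum_{i=1}^I x_{im}\frac{\mathrm{diag}(q^\ast)\,p_{\cdot im}p_{\cdot im}^\top}{\langle q^\ast,p_{\cdot im}\rangle^2}.$$ Then $B$ has nonnegative entries, $\mathbf 1^\top B=\mathbf 1^\top$ (so $B^\top$ is a stochastic matrix), $Bq^\ast=q^\ast$, and all eigenvalues of $B$ are real and lie in $(0,1]$. Consequently the Jacobian $\nabla L(p,q^\ast|x)=E_K-B$ has all eigenvalues in $[0,1)$.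
   Context: $\mathbb S^\circ=\{q\in\mathbb R^K: q_k>0,\ \sum_kq_k=1\}$; $p\in\mathbb S_I^{K\times M}$ (each $p_{k\cdot m}=(p_{kim})_i$ a probability vector), $p_{\cdot im}=(p_{kim})_{k=1}^K$; $x\in\{0,1,2\}^{I\times M}$ with $\sum_ix_{im}=2$; $\mathbf 1=(1,\dots,1)^\top$; $E_K$ the identity matrix. $\ell(p,q|x)=\frac1{2M}\sum_m\big(\log\frac{2!}{\prod_ix_{im}!}+\sum_ix_{im}\log\langle q,p_{\cdot im}\rangle\big)$, with gradient $\nabla\ell(p,q|x)=\frac1{2M}\sum_{m,i}x_{im}\frac{p_{\cdot im}}{\langle q,p_{\cdot im}\rangle}$ and Hessian $\nabla^2\ell(p,q|x)=-\frac1{2M}\sum_{m,i}x_{im}\frac{p_{\cdot im}p_{\cdot im}^\top}{\langle q,p_{\cdot im}\rangle^2}$. $L(p,q|x)=\mathrm{diag}(q)\nabla\ell(p,q|x)$, whose Jacobian is $\mathrm{diag}(\nabla\ell(p,q|x))+\mathrm{diag}(q)\nabla^2\ell(p,q|x)$. Assumption (A1): whenever $x_{im}>0$ there is some $k$ with $p_{kim}>0$. Assumption (A2): for every $s\in\mathbb R^K\setminus\{0\}$ with $\langle s,\mathbf 1\rangle=0$ there exist $i,m$ with $x_{im}>0$ and $\langle s,p_{\cdot im}\rangle\neq0$. *)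

(* Defs.v *)
From HB Require Import structures.
From mathcomp Require Import all_boot all_order all_algebra.
From mathcomp Require Import complex.
Set Implicit Arguments. Unset Strict Implicit. Unset Printing Implicit Defensive.
Import Order.TTheory GRing.Theory Num.Theory.
Local Open Scope ring_scope.

Section Defs.
Variables (R : rcfType) (K I M : nat).

(* p k i m = p_{kim}; x i m = x_{im}; q : column vector in R^K *)
Definition pcol (p : 'I_K -> 'I_I -> 'I_M -> R) (i : 'I_I) (m : 'I_M) : 'cV[R]_K :=
  \col_k p k i m.

Definition inner (q v : 'cV[R]_K) : R := \sum_k q k 0 * v k 0.

Definition is_stoch_p (p : 'I_K -> 'I_I -> 'I_M -> R) : Prop :=
  (forall k i m, 0 <= p k i m) /\ (forall k m, \sum_i p k i m = 1).

Definition is_genotype (x : 'I_I -> 'I_M -> nat) : Prop :=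
  (forall i m, (x i m <= 2)%N) /\ (forall m, (\sum_i x i m)%N = 2%N).

Definition in_open_simplex (q : 'cV[R]_K) : Prop :=
  (forall k, 0 < q k 0) /\ \sum_k q k 0 = 1.

Definition grad_ell p (q : 'cV[R]_K) (x : 'I_I -> 'I_M -> nat) : 'cV[R]_K :=
  (2 * M%:R)^-1 *: \sum_m \sum_i
     ((x i m)%:R / inner q (pcol p i m)) *: pcol p i m.

Definition hess_ell p (q : 'cV[R]_K) (x : 'I_I -> 'I_M -> nat) : 'M[R]_K :=
  - ((2 * M%:R)^-1 *: \sum_m \sum_i
     ((x i m)%:R / (inner q (pcol p i m)) ^+ 2) *: (pcol p i m *m (pcol p i m)^T)).

(* Jacobian of L(p,q|x) = diag(q) grad ell *)
Definition jac_L p (q : 'cV[R]_K) x : 'M[R]_K :=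
  diag_mx (grad_ell p q x)^T + diag_mx q^T *m hess_ell p q x.

Definition Bmat p (q : 'cV[R]_K) x : 'M[R]_K := - (diag_mx q^T *m hess_ell p q x).

Definition assumption_A1 (p : 'I_K -> 'I_I -> 'I_M -> R) (x : 'I_I -> 'I_M -> nat) : Prop :=
  forall i m, (0 < x i m)%N -> exists k, 0 < p k i m.

Definition assumption_A2 (p : 'I_K -> 'I_I -> 'I_M -> R) (x : 'I_I -> 'I_M -> nat) : Prop :=
  forall s : 'cV[R]_K, s != 0 -> \sum_k s k 0 = 0 ->
    exists i m, (0 < x i m)%N /\ inner s (pcol p i m) != 0.

End Defs.

Definition cmx (R : rcfType) (n : nat) (A : 'M[R]_n) : 'M[R[i]]_n :=
  map_mx (fun r => (r%:C)%C) A.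

(* Main.v *)
Require Import Defs.
From HB Require Import structures.
From mathcomp Require Import all_boot all_order all_algebra.
From mathcomp Require Import complex.
From mathcomp Require Import ring lra.
Import Order.TTheory GRing.Theory Num.Theory.
Local Open Scope ring_scope.

Section Aux.
Variables (R : rcfType) (K I M : nat).
Variables (p : 'I_K -> 'I_I -> 'I_M -> R) (x : 'I_I -> 'I_M -> nat) (q : 'cV[R]_K).

Local Notation inn i m := (inner q (pcol p i m)).
Local Notation s := ((2 * M%:R)^-1 : R).
Local Notation a i m := ((x i m)%:R / inn i m ^+ 2 : R).

Lemma innE i m : inn i m = \sum_k q k 0 * p k i m.
Proof. by rewrite /inner; apply: eq_bigr => k _; rewrite /pcol mxE. Qed.

Lemma gradE k : grad_ell p q x k 0 = s * \sum_m \sum_i (x i m)%:R / inn i m * p k i m.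
Proof.
rewrite /grad_ell !mxE summxE; congr (_ * _); apply: eq_bigr => m _.
rewrite summxE; apply: eq_bigr => i _; by rewrite !mxE.
Qed.

Lemma BmatE j k : Bmat p q x j k =
  q j 0 * (s * \sum_m \sum_i a i m * (p j i m * p k i m)).
Proof.
rewrite /Bmat /hess_ell mulmxN opprK mul_diag_mx !mxE summxE; congr (_ * (_ * _)).
apply: eq_bigr => m _; rewrite summxE; apply: eq_bigr => i _.
rewrite !mxE big_ord1 !mxE //.
Qed.

Lemma div_sq_mul (u b : R) : u / b ^+ 2 * b = u / b.
Proof.
have [->|b0] := eqVneq b 0; first by rewrite !(expr0n, mulr0, invr0, mul0r).
by rewrite expr2 invfM !mulrA mulfVK.
Qed.

Lemma colsumB k : \sum_j Bmat p q x j k = grad_ell p q x k 0.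
Proof.
rewrite gradE.
under eq_bigr => j _ do rewrite BmatE mulrCA.
rewrite -mulr_sumr; congr (_ * _).
under eq_bigr => j _ do rewrite mulr_sumr.
rewrite exchange_big; apply: eq_bigr => m _.
under eq_bigr => j _ do rewrite mulr_sumr.
rewrite exchange_big; apply: eq_bigr => i _.
rewrite [RHS](_ : _ = (x i m)%:R / inn i m ^+2 * (\sum_j q j 0 * p j i m) * p k i m); last by rewrite -innE div_sq_mul.
rewrite mulr_sumr mulr_suml; apply: eq_bigr => j _.
by rewrite mulrCA !mulrA.
Qed.

Lemma Bq j : \sum_k Bmat p q x j k * q k 0 = q j 0 * grad_ell p q x j 0.
Proof.
rewrite gradE.
under eq_bigr => k _ do rewrite BmatE [q j 0 * _]mulrC -!mulrA.
rewrite -mulr_sumr [RHS]mulrCA; congr (_ * _).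
rewrite [RHS]mulr_sumr.
under eq_bigr => k _ do rewrite mulr_suml.
rewrite exchange_big; apply: eq_bigr => m _.
under eq_bigr => k _ do rewrite mulr_suml.
rewrite [RHS]mulr_sumr exchange_big; apply: eq_bigr => i _.
rewrite [RHS](_ : _ = q j 0 * ((x i m)%:R / inn i m ^+2 * (\sum_k q k 0 * p k i m) * p j i m)); last by rewrite -innE div_sq_mul.
rewrite mulr_sumr mulr_suml mulr_sumr; apply: eq_bigr => k _.
by ring.
Qed.

Lemma Bnonneg j k : (forall k i m, 0 <= p k i m) -> (forall k, 0 < q k 0) ->
  0 <= Bmat p q x j k.
Proof.
move=> p0 q0; rewrite BmatE; apply: mulr_ge0; first exact: ltW.
apply: mulr_ge0; first by rewrite invr_ge0 mulr_ge0 ?ler0n.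
apply: sumr_ge0 => m _; apply: sumr_ge0 => i _.
by rewrite !mulr_ge0 ?ler0n ?invr_ge0 ?sqr_ge0.
Qed.

End Aux.

Module CxPart.
Local Open Scope complex_scope.

Section Cx.
Variables (R : rcfType) (K I M : nat).
Variables (p : 'I_K -> 'I_I -> 'I_M -> R) (x : 'I_I -> 'I_M -> nat) (q : 'cV[R]_K).

Local Notation inn i m := (inner q (pcol p i m)).
Local Notation s := ((2 * M%:R)^-1 : R).
Local Notation a i m := ((x i m)%:R / inn i m ^+ 2 : R).

Lemma cmxE (n : nat) (A : 'M[R]_n) j k : cmx A j k = (A j k)%:C.
Proof. by rewrite /cmx mxE. Qed.

Lemma conjcD' (u w : R[i]) : conjc (u + w) = conjc u + conjc w.
Proof. by case: u => ? ?; case: w => ? ?; rewrite /= opprD. Qed.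

Lemma conjcM' (u w : R[i]) : conjc (u * w) = conjc u * conjc w.
Proof. case: u => a1 b1; case: w => a2 b2; apply/eqP; rewrite eq_complex /=; apply/andP; split; apply/eqP; ring. Qed.

Lemma conjc_sum (J : finType) (F : J -> R[i]) : conjc (\sum_j F j) = \sum_j conjc (F j).
Proof.
elim/big_rec2: _ => [|j u w _ <-]; first by rewrite /= oppr0.
by rewrite conjcD'.
Qed.

Lemma eig_key (v : 'rV[R[i]]_K) lam : v *m cmx (Bmat p q x) = lam *: v ->
 lam * (\sum_k v 0 k * conjc (v 0 k) * (q k 0)%:C) =
 \sum_m \sum_i ((s * a i m)%:C) *
   ((\sum_j v 0 j * (q j 0)%:C * (p j i m)%:C) * conjc (\sum_j v 0 j * (q j 0)%:C * (p j i m)%:C)).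
Proof.
move=> Hv.
have Ek k : \sum_j v 0 j * (Bmat p q x j k)%:C = lam * v 0 k.
  move/(congr1 (fun A : 'rV[R[i]]_K => A 0 k)): Hv; rewrite !mxE => <-.
  by apply: eq_bigr => j _; rewrite cmxE.
rewrite mulr_sumr.
under eq_bigr => k _ do rewrite !mulrA -Ek.
under eq_bigr => k _.
  rewrite !mulr_suml.
  under eq_bigr => j _.
    rewrite BmatE !rmorphM !rmorph_sum.
    under eq_bigr => m _ do rewrite rmorph_sum.
    rewrite !mulr_sumr !mulr_suml.
    under eq_bigr => m _ do rewrite !mulr_sumr !mulr_suml.
  over.
over.
under [RHS]eq_bigr => m _.
  under eq_bigr => i _.
    rewrite conjc_sum mulr_suml mulr_sumr.
    under eq_bigr => j _ do rewrite mulr_sumr mulr_sumr.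
  over.
over.
simpl.
under eq_bigr => k _ do rewrite exchange_big.
rewrite exchange_big.
under eq_bigr => m _.
  under eq_bigr => k _ do rewrite exchange_big.
  rewrite exchange_big.
over.
simpl.
apply: eq_bigr => m _; apply: eq_bigr => i _; rewrite exchange_big.
apply: eq_bigr => j _; apply: eq_bigr => k _.
rewrite !rmorphM /= !oppr0 !complexr0.
ring.
Qed.

Lemma Re_sum (J : finType) (F : J -> R[i]) : complex.Re (\sum_j F j) = \sum_j complex.Re (F j).
Proof. by elim/big_rec2: _ => [|j u w _ <-] //; case: (F j) => ? ?; case: w => ? ?. Qed.

Lemma Im_sum (J : finType) (F : J -> R[i]) : complex.Im (\sum_j F j) = \sum_j complex.Im (F j).
Proof. by elim/big_rec2: _ => [|j u w _ <-] //; case: (F j) => ? ?; case: w => ? ?. Qed.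

Lemma Re_mulr (u : R[i]) (r : R) : complex.Re (u * r%:C) = complex.Re u * r.
Proof. by case: u => ? ? /=; rewrite mulr0 subr0. Qed.

Lemma Im_mulr (u : R[i]) (r : R) : complex.Im (u * r%:C) = complex.Im u * r.
Proof. by case: u => ? ? /=; rewrite mulr0 add0r. Qed.

Lemma A2_cx (w : 'I_K -> R[i]) : assumption_A2 p x ->
  \sum_k w k = 0 ->
  (forall i m, (0 < x i m)%N -> \sum_k w k * (p k i m)%:C = 0) ->
  forall k, w k = 0.
Proof.
move=> A2 sw zw.
have H (f : R[i] -> R) : (forall u : 'I_K -> R[i], f (\sum_k u k) = \sum_k f (u k)) ->
   (forall u r, f (u * r%:C) = f u * r) -> f 0 = 0 -> forall k, f (w k) = 0.
  move=> fs fm f0.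
  have : (\col_k f (w k) : 'cV[R]_K) == 0.
    apply/negPn/negP => nz.
    have [|i [m [xp]]] := A2 _ nz.
      have := fs w; rewrite sw f0 => e; rewrite [RHS]e; by apply: eq_bigr => k _; rewrite mxE.
    have := fs (fun k => w k * (p k i m)%:C); rewrite zw // f0 => e.
    rewrite /inner (eq_bigr (fun k => f (w k * (p k i m)%:C))) -?e ?eqxx //.
    by move=> k _; rewrite fm !mxE.
  by move/eqP/matrixP => h k; have := h k 0; rewrite !mxE.
move=> k.
have r := H _ (@Re_sum 'I_K) Re_mulr erefl k.
have i := H _ (@Im_sum 'I_K) Im_mulr erefl k.
by move: r i; case: (w k) => /= ? ? -> ->.
Qed.


Lemma eig_B lam : is_stoch_p p -> assumption_A1 p x -> assumption_A2 p x ->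
  in_open_simplex q -> grad_ell p q x = const_mx 1 ->
  eigenvalue (cmx (Bmat p q x)) lam -> [/\ lam \is Num.real, 0 < lam & lam <= 1].
Proof.
move=> [p0 _] A1 A2 [q0 _] G /eigenvalueP [v Hv vnz].
have key := @eig_key v lam Hv.
have [k0 vk0] : exists k, v 0 k != 0.
  apply/existsP; apply: contraR vnz => /existsPn h; apply/eqP/rowP => k.
  by rewrite mxE; apply/eqP; move: (h k); rewrite negbK.
set T := \sum_m _ in key.
set S := \sum_k _ in key.
have Sterm k : 0 <= v 0 k * conjc (v 0 k) * (q k 0)%:C.
  by rewrite mulr_ge0 ?mulcJ_ge0 // ler0c ltW.
have S0 : 0 < S.
  rewrite /S (bigD1 k0) //=; apply: ltr_wpDr; first exact: sumr_ge0.
  rewrite lt_def Sterm andbT !mulf_neq0 ?conjc_eq0 //.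
  by rewrite lt0r_neq0 // ltcR.
have sa0 i0 m0 : 0 <= s * a i0 m0.
  by rewrite mulr_ge0 ?invr_ge0 ?mulr_ge0 ?ler0n ?invr_ge0 ?sqr_ge0.
have T0 : 0 <= T.
  by apply: sumr_ge0 => m _; apply: sumr_ge0 => i _; rewrite mulr_ge0 ?mulcJ_ge0 // ler0c.
have lamE : lam = T / S by rewrite -key mulfK // lt0r_neq0.
have lam0 : 0 <= lam by rewrite lamE divr_ge0 // ltW.
split; first exact: ger0_real.
  rewrite lt_def lam0 andbT; apply/eqP => l0.
  have {}T0 : T = 0 by rewrite -key l0 mul0r.
  have Tz m i : (s * a i m)%:C * ((\sum_j v 0 j * (q j 0)%:C * (p j i m)%:C) *
           conjc (\sum_j v 0 j * (q j 0)%:C * (p j i m)%:C)) = 0.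
    have Fm : forall m, 0 <= \sum_i (s * a i m)%:C * ((\sum_j v 0 j * (q j 0)%:C * (p j i m)%:C) *
           conjc (\sum_j v 0 j * (q j 0)%:C * (p j i m)%:C)).
      by move=> m0; apply: sumr_ge0 => i0 _; rewrite mulr_ge0 ?mulcJ_ge0 // ler0c.
    have := psumr_eq0P (fun m0 _ => Fm m0) T0 (i := m) erefl.
    by move/psumr_eq0P => -> // i0 _; rewrite mulr_ge0 ?mulcJ_ge0 // ler0c.
  have zw i m : (0 < x i m)%N -> \sum_k v 0 k * (q k 0)%:C * (p k i m)%:C = 0.
    move=> xp; have := Tz m i; move/eqP; rewrite mulf_eq0 => /orP [/eqP h|].
      suff : 0 < (s * a i m)%:C by rewrite h ltxx.
      rewrite ltcR.
      apply: mulr_gt0; first by rewrite invr_gt0 mulr_gt0 // ltr0n; by case: (m) => mm /= mp; apply: leq_ltn_trans mp.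
      apply: divr_gt0; first by rewrite ltr0n.
      apply: exprn_gt0; rewrite innE; have [k pk] := A1 _ _ xp.
      rewrite (bigD1 k) //=; apply: ltr_pwDl; first exact: mulr_gt0.
      by apply: sumr_ge0 => j _; rewrite mulr_ge0 // ltW.
    by rewrite mulf_eq0 conjc_eq0 orbb => /eqP.
  have sw : \sum_k v 0 k * (q k 0)%:C = 0.
    transitivity (\sum_k v 0 k * (q k 0)%:C * (grad_ell p q x k 0)%:C).
      by apply: eq_bigr => k _; rewrite G mxE rmorph1 mulr1.
    under eq_bigr => k _ do rewrite gradE rmorphM mulrCA rmorph_sum mulr_sumr.
    rewrite -mulr_sumr exchange_big /=.
    apply/eqP; rewrite mulf_eq0; apply/orP; right; apply/eqP.
    apply: big1 => m _.
    under eq_bigr => k _ do rewrite rmorph_sum mulr_sumr.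
    rewrite exchange_big; apply: big1 => i _.
    have [x0|xp] := posnP (x i m).
      by apply: big1 => k _; rewrite x0 !mul0r rmorph0 mulr0.
    transitivity (((x i m)%:R / inn i m)%:C * \sum_k v 0 k * (q k 0)%:C * (p k i m)%:C).
      by rewrite mulr_sumr; apply: eq_bigr => k _; rewrite rmorphM; ring.
    by rewrite zw // mulr0.
  have := @A2_cx (fun k => v 0 k * (q k 0)%:C) A2 sw zw k0.
  move/eqP; rewrite mulf_eq0 (negbTE vk0) /= => /eqP h; have := q0 k0.
  by rewrite -ltcR h rmorph0 ltxx.
have colsum k : \sum_j Bmat p q x j k = 1 by rewrite colsumB G mxE.
have Ek k : \sum_j v 0 j * (Bmat p q x j k)%:C = lam * v 0 k.
  move/(congr1 (fun A : 'rV[R[i]]_K => A 0 k)): Hv; rewrite !mxE => <-.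
  by apply: eq_bigr => j _; rewrite cmxE.
pose f k := Num.sqrt (complex.Re (v 0 k) ^+ 2 + complex.Im (v 0 k) ^+ 2).
have nf k : `|v 0 k| = (f k)%:C by rewrite normc_def.
have [km _ kmax] := arg_maxP (i0 := k0) (P := xpredT) f isT.
have vkm : 0 < `|v 0 km|.
  apply: (lt_le_trans (_ : 0 < `|v 0 k0|)); first by rewrite normr_gt0.
  by rewrite !nf lecR; apply: kmax.
rewrite -(ger0_norm lam0) -(ler_pM2r vkm) mul1r -normrM -Ek.
apply: (le_trans (ler_norm_sum _ _ _)).
apply: (le_trans (_ : _ <= \sum_j `|v 0 km| * (Bmat p q x j km)%:C)).
  apply: ler_sum => j _; rewrite normrM [`|(_)%:C|]ger0_norm ?ler0c ?Bnonneg //.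
  by apply: ler_wpM2r; rewrite ?ler0c ?Bnonneg // !nf lecR; apply: kmax.
by rewrite -mulr_sumr -rmorph_sum colsum rmorph1 mulr1.
Qed.

End Cx.

End CxPart.
Import CxPart.

Theorem mainTheorem5 (R : rcfType) (K I M : nat)
  (p : 'I_K -> 'I_I -> 'I_M -> R) (x : 'I_I -> 'I_M -> nat) (q : 'cV[R]_K) :
  is_stoch_p p -> is_genotype x ->
  assumption_A1 p x -> assumption_A2 p x ->
  in_open_simplex q ->
  grad_ell p q x = const_mx 1 ->
  ([/\ (forall j k, 0 <= Bmat p q x j k),
      (const_mx 1 : 'rV[R]_K) *m Bmat p q x = const_mx 1,
      Bmat p q x *m q = q &
      (forall lam : R[i], eigenvalue (cmx (Bmat p q x)) lam ->
          [/\ lam \is Num.real, 0 < lam & lam <= 1])]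
  /\ (jac_L p q x = 1%:M - Bmat p q x /\
      (forall lam : R[i], eigenvalue (cmx (jac_L p q x)) lam ->
          [/\ lam \is Num.real, 0 <= lam & lam < 1]))).
Proof.
move=> hp hx A1 A2 hq G.
have [p0 _] := hp; have [q0 _] := hq.
have jac : jac_L p q x = 1%:M - Bmat p q x.
  by rewrite /jac_L /Bmat G trmx_const diag_const_mx opprK.
have eB := fun lam => @eig_B R K I M p x q lam hp A1 A2 hq G.
split; first split.
- by move=> j k; apply: Bnonneg.
- apply/rowP => k; rewrite !mxE.
  under eq_bigr => j _ do rewrite mxE mul1r.
  by rewrite colsumB G mxE.
- by apply/colP => j; rewrite !mxE Bq G mxE mulr1.
- exact: eB.
split; first exact: jac.
move=> lam; rewrite jac => /eigenvalueP [v Hv vnz].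
have : eigenvalue (cmx (Bmat p q x)) (1 - lam).
  apply/eigenvalueP; exists v => //.
  rewrite scalerBl scale1r -Hv /cmx map_mxB map_mx1 mulmxBr mulmx1 opprB addrC subrK //.
move/eB => [r l0 l1].
have -> : lam = 1 - (1 - lam) by rewrite opprB addrC subrK.
split.
- by rewrite rpredB ?rpred1.
- by rewrite subr_ge0.
- by rewrite ltrBlDr ltrDl.
Qed.
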